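(* Let $X\subseteq Y$ with $|X|\le|Y\setminus X|$. Then the map $\pi:S_\infty(Y)\to(I(X),\tau_{pp})$, $\pi(f)=\widehat f$, is continuous, onto and open, where $S_\infty(Y)$ carries the topology of pointwise convergence (the product topology inherited from $Y^Y$, $Y$ discrete).
   Context: $S_\infty(Y)$ is the group of all bijections $Y\to Y$. $I(X)$ is the set of all bijections $f:A\to B$ with $A,B\subseteq X$ (including the empty map), $\mathrm{dom}(f)=A$, $\mathrm{im}(f)=B$. For $f\in S_\infty(Y)$, $\widehat f=\{(x,f(x)): x\in X,\ f(x)\in X\}$, the restriction of $f$ to $X\cap f^{-1}(X)$. For $x,y\in X$: $v(x,y)=\{f\in I(X): x\in\mathrm{dom}(f), f(x)=y\}$, $w_1(x)=\{f: x\notin\mathrm{dom}(f)\}$, $w_2(y)=\{f: y\notin\mathrm{im}(f)\}$; $\tau_{pp}$ is the topology on $I(X)$ generated by the subbasis of all these sets. *)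

(* Defs.v *)
From HB Require Import structures.
From mathcomp Require Import all_boot.
From mathcomp Require Import boolp classical_sets functions cardinality.
From Stdlib Require Import List.
Set Implicit Arguments. Unset Strict Implicit. Unset Printing Implicit Defensive.
Local Open Scope classical_set_scope.

(* Topology on a carrier C : set T generated by a subbasis S : set (set T)
   (the subspace-style topology on C whose open sets are unions of finite
   intersections of members of S, intersected with C).
   The empty intersection is C itself. *)
Definition sb_open {T : Type} (C : set T) (S : set (set T)) (U : set T) : Prop :=
  U `<=` C /\
  forall t, U t ->
    exists l : list (set T),
      Forall (fun B => S B /\ B t) l /\
      forall s, C s -> Forall (fun B => B s) l -> U s.

Definition Sinf (Y : Type) : set (Y -> Y) := [set f | bijective f].

(* Subbasis of the topology of pointwise convergence on Y^Y (Y discrete):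
   the sets { f | f y = z }. *)
Definition pw_subbasis (Y : Type) : set (set (Y -> Y)) :=
  [set B | exists y z : Y, B = [set f | f y = z]].

(* I(X): partial bijections f : A -> B with A, B subsets of X, represented
   by their graph (a set of pairs) which is functional and injective. *)
Definition IX (Y : Type) (X : set Y) : set (set (Y * Y)) :=
  [set g | (forall p, g p -> X p.1 /\ X p.2) /\
           (forall x y y', g (x, y) -> g (x, y') -> y = y') /\
           (forall x x' y, g (x, y) -> g (x', y) -> x = x')].

Definition v_set (Y : Type) (x y : Y) : set (set (Y * Y)) := [set g | g (x, y)].
Definition w1_set (Y : Type) (x : Y) : set (set (Y * Y)) :=
  [set g | forall y, ~ g (x, y)].
Definition w2_set (Y : Type) (y : Y) : set (set (Y * Y)) :=
  [set g | forall x, ~ g (x, y)].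

Definition pp_subbasis (Y : Type) (X : set Y) : set (set (set (Y * Y))) :=
  [set B | (exists x y, X x /\ X y /\ B = v_set x y) \/
           (exists x, X x /\ B = w1_set x) \/
           (exists y, X y /\ B = w2_set y)].

Definition hat (Y : Type) (X : set Y) (f : Y -> Y) : set (Y * Y) :=
  [set p | X p.1 /\ X p.2 /\ f p.1 = p.2].

(* Main.v *)
Require Import Defs.
From mathcomp Require Import all_boot.
From mathcomp Require Import boolp classical_sets functions cardinality.
From Stdlib Require Import List.
Local Open Scope classical_set_scope.
Set Implicit Arguments. Unset Strict Implicit.


Lemma hat_IX (Y : Type) (X : set Y) f : Sinf f -> IX X (hat X f).
Proof.
move=> bf; split; [|split].
- by move=> [a b] [? [? _]].
- by move=> x y y' [_ [_ /= <-]] [_ [_ /= <-]].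
- by move=> x x' y [_ [_ /= H1]] [_ [_ /= H2]]; apply: (bij_inj bf); rewrite H1 H2.
Qed.

Definition psnd (Y : Type) (g : set (Y * Y)) (x : Y) : Y :=
  if pselect (exists y, g (x, y)) is left e then proj1_sig (cid e) else x.

Lemma psndP (Y : Type) (g : set (Y * Y)) x : (exists y, g (x, y)) -> g (x, psnd g x).
Proof.
rewrite /psnd; case: pselect => // e _. exact: proj2_sig (cid e).
Qed.

Definition gT (Y : Type) (g : set (Y * Y)) : set (Y * Y) := [set p | g (p.2, p.1)].

Definition hinv (Y : Type) (X : set Y) (h : Y -> Y) (y : Y) : Y :=
  if pselect (exists b, X b /\ h b = y) is left e then proj1_sig (cid e) else y.

Lemma hinvP (Y : Type) (X : set Y) (h : Y -> Y) y :
  (exists b, X b /\ h b = y) -> X (hinv X h y) /\ h (hinv X h y) = y.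
Proof.
rewrite /hinv; case: pselect => // e _. exact: proj2_sig (cid e).
Qed.

Definition onto (Y : Type) (X : set Y) (h : Y -> Y) (g : set (Y * Y)) (y : Y) : Y :=
  if pselect (X y) is left _ then
    (if pselect (exists z, g (y, z)) is left _ then psnd g y else h y)
  else if pselect (exists b, X b /\ h b = y) is left _ then
    (if pselect (exists x, g (x, hinv X h y)) is left _
     then h (psnd (gT g) (hinv X h y)) else hinv X h y)
  else y.

Section Onto.
Variables (Y : Type) (X : set Y) (h : Y -> Y).
Hypothesis hZ : forall x, X x -> ~ X (h x).
Hypothesis hinj : forall x y, X x -> X y -> h x = h y -> x = y.

Lemma IX_gT (g : set (Y * Y)) : IX X g -> IX X (gT g).
Proof.
move=> [H1 [H2 H3]]; split; [|split].
- by move=> [a b] /H1 /= [].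
- by move=> x y y' /= A B; apply: H3 A B.
- by move=> x x' y /= A B; apply: H2 A B.
Qed.

Lemma gTK (g : set (Y * Y)) : gT (gT g) = g.
Proof. by apply/seteqP; split=> -[a b]. Qed.

Lemma onto_fix (g : set (Y * Y)) y : ~ X y -> ~ (exists b, X b /\ h b = y) -> onto X h g y = y.
Proof. by move=> nX nh; rewrite /onto; case: pselect => //; case: pselect. Qed.

Lemma onto_X1 (g : set (Y * Y)) y : X y -> (exists z, g (y, z)) -> onto X h g y = psnd g y.
Proof. by move=> a b; rewrite /onto; case: pselect => // _; case: pselect. Qed.
Lemma onto_X2 (g : set (Y * Y)) y : X y -> ~ (exists z, g (y, z)) -> onto X h g y = h y.
Proof. by move=> a b; rewrite /onto; case: pselect => // _; case: pselect. Qed.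
Lemma onto_Z1 (g : set (Y * Y)) y : ~ X y -> (exists b, X b /\ h b = y) ->
  (exists x, g (x, hinv X h y)) -> onto X h g y = h (psnd (gT g) (hinv X h y)).
Proof. by move=> a b c; rewrite /onto; case: pselect => // _; case: pselect => // _; case: pselect. Qed.
Lemma onto_Z2 (g : set (Y * Y)) y : ~ X y -> (exists b, X b /\ h b = y) ->
  ~ (exists x, g (x, hinv X h y)) -> onto X h g y = hinv X h y.
Proof. by move=> a b c; rewrite /onto; case: pselect => // _; case: pselect => // _; case: pselect. Qed.

Lemma onto_cancel (g : set (Y * Y)) : IX X g -> cancel (onto X h g) (onto X h (gT g)).
Proof.
move=> [H1 [H2 H3]] y.
have [Xy|Xy] := pselect (X y).
- have [ex|ex] := pselect (exists z, g (y, z)).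
  + rewrite (onto_X1 Xy ex).
    have gy := psndP ex. have [_ Xz] := H1 _ gy.
    have ex2 : exists z, gT g (psnd g y, z) by exists y.
    rewrite (onto_X1 Xz ex2).
    have := psndP ex2; rewrite /gT /= => gw.
    exact: H3 gw gy.
  + rewrite (onto_X2 Xy ex).
    have ex2 : exists b, X b /\ h b = h y by exists y.
    have [Xb hb] := hinvP ex2. have eb := hinj Xb Xy hb.
    have ex3 : ~ exists x, gT g (x, hinv X h (h y)).
      by rewrite eb => -[x gx]; apply: ex; exists x.
    by rewrite (onto_Z2 (hZ Xy) ex2 ex3).
- have [ex|ex] := pselect (exists b, X b /\ h b = y).
  + have [Xb hb] := hinvP ex.
    have [ex2|ex2] := pselect (exists x, g (x, hinv X h y)).
    * rewrite (onto_Z1 Xy ex ex2).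
      have ex2' : exists z, gT g (hinv X h y, z) by exact: ex2.
      have gx := psndP ex2'. rewrite /gT /= in gx. have [Xx _] := H1 _ gx.
      set x := psnd _ _ in gx Xx *.
      have ex3 : exists b, X b /\ h b = h x by exists x.
      have [Xb' hb'] := hinvP ex3. have eb := hinj Xb' Xx hb'.
      have ex4 : exists u, gT g (u, hinv X h (h x)) by rewrite eb; exists (hinv X h y).
      rewrite (onto_Z1 (hZ Xx) ex3 ex4) gTK.
      have eb' : hinv X h (h x) = x := eb.
      have ex5 : exists z, g (hinv X h (h x), z) by exact: ex4.
      have gu := psndP ex5. rewrite eb' in gu *.
      by rewrite (H2 _ _ _ gu gx).
    * rewrite (onto_Z2 Xy ex ex2).
      have ex3 : ~ exists z, gT g (hinv X h y, z).
        by move=> -[z gz]; apply: ex2; exists z.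
      by rewrite (onto_X2 Xb ex3).
  + by rewrite !onto_fix.
Qed.

Lemma onto_bij (g : set (Y * Y)) : IX X g -> bijective (onto X h g).
Proof.
move=> Hg; exists (onto X h (gT g)); first exact: onto_cancel.
have := onto_cancel (IX_gT Hg). by rewrite gTK.
Qed.

Lemma onto_hat (g : set (Y * Y)) : IX X g -> hat X (onto X h g) = g.
Proof.
move=> [H1 [H2 H3]]; apply/seteqP; split=> -[a b] /=.
- move=> [/= Xa [/= Xb /= E]].
  have [ex|ex] := pselect (exists z, g (a, z)).
  + by rewrite (onto_X1 Xa ex) in E; rewrite -E; apply: psndP.
  + by rewrite (onto_X2 Xa ex) in E; case: (hZ Xa); rewrite E.
- move=> gab; have [Xa Xb] := H1 _ gab; split => //; split => //=.
  have ex : exists z, g (a, z) by exists b.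
  rewrite (onto_X1 Xa ex). exact: H2 (psndP ex) gab.
Qed.

End Onto.


Lemma cont_list (Y : Type) (X : set Y) (t : Y -> Y) : Sinf t ->
  forall lV : list (set (set (Y * Y))),
  Forall (fun B => pp_subbasis X B /\ B (hat X t)) lV ->
  exists l : list (set (Y -> Y)),
    Forall (fun B => pw_subbasis B /\ B t) l /\
    forall s, Sinf s -> Forall (fun B => B s) l -> Forall (fun B => B (hat X s)) lV.
Proof.
move=> bt; have [ti tK Kt] := bt.
elim=> [|B lV IH] H; first by exists nil; split => // s _ _; constructor.
inversion H as [|? ? [HB Bt] HlV]; subst.
have [l [Hl1 Hl2]] := IH HlV.
case: HB => [[x [y [Xx [Xy EB]]]]|[[x [Xx EB]]|[y [Xy EB]]]]; subst B.
- exists ([set s | s x = y] :: l); split.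
  + constructor => //; split; first by exists x, y.
    by move: Bt; rewrite /v_set /hat /= => -[_ [_ ->]].
  + move=> s bs Hs; inversion Hs as [|? ? Hsx Hsl]; subst.
    constructor; last exact: Hl2.
    by rewrite /v_set /=; split => //; split.
- exists ([set s | s x = t x] :: l); split.
  + constructor => //; split => //; by exists x, (t x).
  + move=> s bs Hs; inversion Hs as [|? ? Hsx Hsl]; subst.
    constructor; last exact: Hl2.
    move=> y [_ [Xy /= E]]; apply: (Bt y); split => //; split => //=.
    by rewrite -E Hsx.
- exists ([set s | s (ti y) = y] :: l); split.
  + constructor => //; split; first by exists (ti y), y.
    by rewrite /= Kt.
  + move=> s bs Hs; inversion Hs as [|? ? Hsx Hsl]; subst.
    constructor; last exact: Hl2.
    move=> x [Xx [_ /= E]].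
    have ex : x = ti y by apply: (bij_inj bs); rewrite E Hsx.
    apply: (Bt x); split => //; split => //=. by rewrite ex Kt.
Qed.

Lemma continuity (Y : Type) (X : set Y) V :
  sb_open (IX X) (pp_subbasis X) V ->
  sb_open (@Sinf Y) (@pw_subbasis Y) [set f | @Sinf Y f /\ V (hat X f)].
Proof.
move=> [VI Vo]; split; first by move=> f [].
move=> t [bt Vt].
have [lV [HlV1 HlV2]] := Vo _ Vt.
have [l [Hl1 Hl2]] := cont_list bt HlV1.
exists l; split => // s bs Hs; split => //.
by apply: HlV2 => //; [apply: hat_IX | apply: Hl2].
Qed.


Lemma pw_extract (Y : Type) (f : Y -> Y) (l : list (set (Y -> Y))) :
  Forall (fun B => pw_subbasis B /\ B f) l ->
  exists P : list Y, forall s, (forall q, In q P -> s q = f q) -> Forall (fun B => B s) l.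
Proof.
elim: l => [|B l IH] H; first by exists nil => s _; constructor.
inversion H as [|? ? [[y [z EB]] Bf] Hl]; subst.
have [P HP] := IH Hl.
exists (y :: P) => s Hs; constructor.
- by rewrite /= (Hs y (or_introl erefl)).
- by apply: HP => q Hq; apply: Hs; right.
Qed.

Definition Cnd (Y : Type) (X : set Y) (f : Y -> Y) (g : set (Y * Y)) (p : Y) :=
  (X p -> X (f p) -> g (p, f p)) /\ (X p -> ~ X (f p) -> forall y, ~ g (p, y)) /\
  (~ X p -> X (f p) -> forall x, ~ g (x, f p)).

Lemma pp_list (Y : Type) (X : set Y) (f : Y -> Y) : Sinf f -> forall P : list Y,
  exists lpp, Forall (fun B => pp_subbasis X B /\ B (hat X f)) lpp /\
   forall g, Forall (fun B => B g) lpp -> forall p, In p P -> Cnd X f g p.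
Proof.
move=> bf; elim=> [|p P IH]; first by exists nil; split => // g _ p [].
have [lpp [H1 H2]] := IH.
suff [lp [Hp1 Hp2]] : exists lp, Forall (fun B => pp_subbasis X B /\ B (hat X f)) lp /\
   forall g, Forall (fun B => B g) lp -> Cnd X f g p.
  exists (lp ++ lpp); split; first by apply Forall_app.
  move=> g /Forall_app [Hg1 Hg2] q [<-|Hq]; first exact: Hp2.
  exact: H2.
have [Xp|Xp] := pselect (X p); have [Xf|Xf] := pselect (X (f p)).
- exists [:: v_set p (f p)]; split.
  + constructor => //; split; first by left; exists p, (f p).
    by rewrite /v_set /hat.
  + move=> g Hg; inversion Hg as [|? ? HB]; subst.
    split; [by move=> _ _; exact: HB|split=> //].
- exists [:: w1_set p]; split.
  + constructor => //; split; first by right; left; exists p.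
    by move=> y [_ [Xy /= E]]; apply: Xf; rewrite E.
  + move=> g Hg; inversion Hg as [|? ? HB]; subst.
    split; [by []|split=> //].
- exists [:: w2_set (f p)]; split.
  + constructor => //; split; first by right; right; exists (f p).
    move=> x [Xx [_ /= E]]. by apply: Xp; rewrite -(bij_inj bf E).
  + move=> g Hg; inversion Hg as [|? ? HB]; subst.
    split; [by []|split=> //].
- exists nil; split; first by []. move=> g _; split; [|split]; intros; contradiction.
Qed.

Lemma fin_list (Y : Type) (X : set Y) (f : Y -> Y) : forall l : list Y,
  exists lpp, Forall (fun B => pp_subbasis X B /\ B (hat X f)) lpp /\
   forall g, Forall (fun B => B g) lpp -> forall x, In x l -> X x ->
     (forall y, hat X f (x, y) -> g (x, y)) /\
     ((forall y, ~ hat X f (x, y)) -> forall y, ~ g (x, y)).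
Proof.
elim=> [|p P IH]; first by exists nil; split => // g _ p [].
have [lpp [H1 H2]] := IH.
suff [lp [Hp1 Hp2]] : exists lp, Forall (fun B => pp_subbasis X B /\ B (hat X f)) lp /\
   forall g, Forall (fun B => B g) lp -> X p ->
     (forall y, hat X f (p, y) -> g (p, y)) /\
     ((forall y, ~ hat X f (p, y)) -> forall y, ~ g (p, y)).
  exists (lp ++ lpp); split; first by apply Forall_app.
  move=> g /Forall_app [Hg1 Hg2] q [<-|Hq]; first exact: Hp2.
  exact: H2.
have [Xp|Xp] := pselect (X p); last by exists nil; split.
have [[y hy]|ny] := pselect (exists y, hat X f (p, y)).
- exists [:: v_set p y]; split.
  + constructor => //; split => //; left; exists p, y; split => //.
    by case: hy => _ [].
  + move=> g Hg _; inversion Hg; subst; split.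
    * move=> y' hy'. have <- // : y = y'.
      by case: hy => _ [_ /= <-]; case: hy' => _ [_ /= <-].
    * by move=> H; case: (H y).
- exists [:: w1_set p]; split.
  + constructor => //; split; first by right; left; exists p.
    by move=> y hy; apply: ny; exists y.
  + move=> g Hg _; inversion Hg; subst; split => //.
    by move=> y hy; case: ny; exists y.
Qed.


Lemma inf_seq (Y : Type) (X : set Y) :
  ~ (exists l : list Y, forall x, X x -> In x l) ->
  exists s : nat -> Y, (forall n, X (s n)) /\ (forall m n, s m = s n -> m = n).
Proof.
move=> nfin.
have H : forall l : list Y, exists x, X x /\ ~ In x l.
  move=> l; apply: contrapT => nx; apply: nfin; exists l => x Xx.
  by apply: contrapT => nI; apply: nx; exists x.
pose pk (l : list Y) := proj1_sig (cid (H l)).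
have pkP : forall l, X (pk l) /\ ~ In (pk l) l by move=> l; exact: proj2_sig (cid (H l)).
pose build := fix build n := match n with 0 => nil | S n => pk (build n) :: build n end.
exists (fun n => pk (build n)); split; first by move=> n; case: (pkP (build n)).
have memb : forall n m, (m < n)%N -> In (pk (build m)) (build n).
  elim=> [//|n IH] m; rewrite ltnS leq_eqVlt => /orP [/eqP ->|/IH]; first by left.
  by move=> HI; right.
move=> m n E; case: (ltngtP m n) => // Hmn.
- by case: (pkP (build n)) => _ []; rewrite -E; apply: memb.
- by case: (pkP (build m)) => _ []; rewrite E; apply: memb.
Qed.

Lemma room (Y : Type) (X : set Y) (h0 : Y -> Y) (s : nat -> Y) :
  (forall x, X x -> ~ X (h0 x)) ->
  (forall x y, X x -> X y -> h0 x = h0 y -> x = y) ->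
  (forall n, X (s n)) -> (forall m n, s m = s n -> m = n) ->
  exists (h : Y -> Y) (r : nat -> Y),
   (forall x, X x -> ~ X (h x)) /\
   (forall x y, X x -> X y -> h x = h y -> x = y) /\
   (forall n, ~ X (r n)) /\ (forall m n, r m = r n -> m = n) /\
   (forall n, ~ (exists b, X b /\ h b = r n)).
Proof.
move=> hZ0 hinj0 Xs sinj.
pose h x := if pselect (exists n, s n = x) is left e then h0 (s (proj1_sig (cid e)).*2) else h0 x.
have hE1 : forall n, h (s n) = h0 (s n.*2).
  move=> n; rewrite /h; case: pselect => [e|[]]; last by exists n.
  by rewrite (sinj _ _ (proj2_sig (cid e))).
have hE2 : forall x, ~ (exists n, s n = x) -> h x = h0 x.
  by move=> x nx; rewrite /h; case: pselect.
have odd_ne : forall a n, a.*2 <> n.*2.+1.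
  by move=> a n /(congr1 odd); rewrite /= !odd_double.
exists h, (fun n => h0 (s n.*2.+1)); split; [|split; [|split; [|split]]].
- move=> x Xx; have [[n <-]|nx] := pselect (exists n, s n = x).
  + by rewrite hE1; apply: hZ0.
  + by rewrite hE2 //; apply: hZ0.
- move=> x y Xx Xy.
  have [[a <-]|nx] := pselect (exists n, s n = x);
  have [[b <-]|ny] := pselect (exists n, s n = y).
  + rewrite !hE1 => /hinj0 E; have /double_inj -> := sinj _ _ (E (Xs _) (Xs _)) => //.
  + rewrite hE1 (hE2 _ ny) => /hinj0 E. by case: ny; exists a.*2; apply: E.
  + rewrite hE1 (hE2 _ nx) => /hinj0 E. by case: nx; exists b.*2; symmetry; apply: E.
  + by rewrite (hE2 _ nx) (hE2 _ ny); apply: hinj0.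
- by move=> n; apply: hZ0.
- move=> m n /hinj0 E; have := sinj _ _ (E (Xs _) (Xs _)).
  by move=> [] /double_inj.
- move=> n [b [Xb]]; have [[a <-]|nx] := pselect (exists n, s n = b).
  + rewrite hE1 => /hinj0 E; have := sinj _ _ (E (Xs _) (Xs _)). exact: odd_ne.
  + rewrite hE2 // => /hinj0 E. by case: nx; exists n.*2.+1; symmetry; apply: E.
Qed.

Lemma pigeon (Y : Type) (r : nat -> Y) : (forall m n, r m = r n -> m = n) ->
  forall L : list Y, exists n, ~ In (r n) L.
Proof.
move=> rinj L.
suff [N HN] : exists N, forall m, (N <= m)%N -> ~ In (r m) L by exists N; apply: HN.
elim: L => [|a L IH]; first by exists 0 => m _ [].
case: IH => N HN.
have [[k rk]|nk] := pselect (exists k, r k = a).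
- exists (maxn N k.+1) => m; rewrite geq_max => /andP [H1 H2] [E|HI]; last exact: HN m H1 HI.
  by move: H2; rewrite -rk in E; rewrite (rinj _ _ E) ltnn.
- exists N => m Hm [E|HI]; last exact: HN m Hm HI.
  by apply: nk; exists m.
Qed.


Definition cyc (Y : Type) (p t w y : Y) : Y :=
  if pselect (y = p) is left _ then t else
  if pselect (y = t) is left _ then w else
  if pselect (y = w) is left _ then p else y.

Section Cyc.
Variables (Y : Type) (p t w : Y).
Hypotheses (tp : t <> p) (wp : w <> p) (wt : w <> t).
Lemma cyc_p : cyc p t w p = t.
Proof. by rewrite /cyc; case: pselect. Qed.
Lemma cyc_t : cyc p t w t = w.
Proof. by rewrite /cyc; case: pselect => // _; case: pselect. Qed.
Lemma cyc_w : cyc p t w w = p.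
Proof. by rewrite /cyc; case: pselect => // _; case: pselect => // _; case: pselect. Qed.
Lemma cyc_o y : y <> p -> y <> t -> y <> w -> cyc p t w y = y.
Proof. by move=> *; rewrite /cyc; case: pselect => // _; case: pselect => // _; case: pselect. Qed.
End Cyc.

Lemma cyc_bij (Y : Type) (p t w : Y) : t <> p -> w <> p -> w <> t -> bijective (cyc p t w).
Proof.
move=> tp wp wt; have pt := nesym tp; have pw := nesym wp; have tw := nesym wt.
exists (cyc p w t) => y.
- have [->|yp] := pselect (y = p); first by rewrite (cyc_p p t w) (@cyc_w _ p w t).
  have [->|yt] := pselect (y = t); first by rewrite (@cyc_t _ p t w) // (@cyc_t _ p w t).
  have [->|yw] := pselect (y = w); first by rewrite (@cyc_w _ p t w) // (cyc_p p w t).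
  by rewrite (cyc_o yp yt yw) (cyc_o yp yw yt).
- have [->|yp] := pselect (y = p); first by rewrite (cyc_p p w t) (@cyc_w _ p t w).
  have [->|yt] := pselect (y = t); first by rewrite (@cyc_w _ p w t) // (cyc_p p t w).
  have [->|yw] := pselect (y = w); first by rewrite (@cyc_t _ p w t) // (@cyc_t _ p t w).
  by rewrite (cyc_o yp yw yt) (cyc_o yp yt yw).
Qed.

Lemma pins (Y : Type) (X : set Y) (f : Y -> Y) (g : set (Y * Y)) (r : nat -> Y) :
  Sinf f -> (forall n, ~ X (r n)) -> (forall m n, r m = r n -> m = n) ->
  (exists f0, Sinf f0 /\ hat X f0 = g /\ forall n, f0 (r n) = r n) ->
  forall L : list Y, (forall p, In p L -> Cnd X f g p) ->
  exists f' (E : list Y), Sinf f' /\ hat X f' = g /\ (forall q, In q L -> f' q = f q) /\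
     (forall n, ~ In (r n) E -> f' (r n) = r n).
Proof.
move=> bf rZ rinj [f0 [bf0 [hf0 ff0]]].
elim=> [|p L IH] HC.
  by exists f0, nil; split => //; split => //; split => // q [].
have [f' [E [bf' [hf' [pin fix']]]]] := IH (fun q Hq => HC q (or_intror Hq)).
have HCp := HC p (or_introl erefl). rewrite -hf' in HCp.
have [ep|nep] := pselect (f' p = f p).
  exists f', E; split => //; split => //; split => // q [<-|]; [by [] | exact: pin].
have [fi fK Kf] := bf'.
set t := fi (f p). have ft : f' t = f p by rewrite /t Kf.
have [n nIn] := pigeon rinj (p :: t :: L ++ E).
set w := r n in nIn.
have tp : t <> p by move=> E'; apply: nep; rewrite -{1}E' ft.
have wp : w <> p by move=> E'; apply: nIn; left; rewrite E'.
have wt : w <> t by move=> E'; apply: nIn; right; left; rewrite E'.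
have wL : ~ In w L by move=> H; apply: nIn; right; right; apply: in_or_app; left.
have wE : ~ In w E by move=> H; apply: nIn; right; right; apply: in_or_app; right.
have Xw : ~ X w by apply: rZ.
have fw : f' w = w by apply: fix'.
have [C1 [C2 C3]] := HCp.
have nXfp : X p -> ~ X (f p).
  by move=> Xp Xfp; have [_ [_ /= E']] := C1 Xp Xfp; apply: nep.
exists (f' \o cyc p t w), (p :: t :: w :: E); split; [|split; [|split]].
- exact: bij_comp bf' (cyc_bij tp wp wt).
- rewrite -hf'; apply/seteqP; split => -[a b] /= [Xa [Xb Eab]]; split => //; split => //=;
  move: Eab => /=.
  + have [ap|ap] := pselect (a = p).
      subst a; rewrite cyc_p // ft => Eb. by case: (nXfp Xa); rewrite Eb.
    have [at'|at'] := pselect (a = t).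
      by subst a; rewrite cyc_t // fw => Eb; case: Xw; rewrite Eb.
    have [aw|aw] := pselect (a = w); first by subst a.
    by rewrite cyc_o.
  + have [ap|ap] := pselect (a = p).
      subst a => Eb. have [Xfp|Xfp] := pselect (X (f p)); first by case: (nXfp Xa).
      by case: (C2 Xa Xfp b); split => //; split.
    have [at'|at'] := pselect (a = t).
      subst a; rewrite ft => Eb.
      have [Xp|Xp] := pselect (X p).
        by case: (nXfp Xp); rewrite Eb.
      have Xfp : X (f p) by rewrite Eb.
      by case: (C3 Xp Xfp t); split => //; split => //.
    have [aw|aw] := pselect (a = w); first by subst a.
    by rewrite cyc_o.
- move=> q [<-|Hq] /=; first by rewrite cyc_p.
  have qp : q <> p by move=> E'; apply: nep; rewrite -E'; apply: pin.
  have qt : q <> t.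
    move=> E'; apply: qp; apply: (bij_inj bf); by rewrite -ft -E' pin.
  have qw : q <> w by move=> E'; apply: wL; rewrite -E'.
  by rewrite cyc_o // pin.
- move=> m Hm /=.
  rewrite cyc_o; first by apply: fix' => H; apply: Hm; do 3 right.
  + by move=> E'; apply: Hm; left.
  + by move=> E'; apply: Hm; right; left.
  + by move=> E'; apply: Hm; right; right; left.
Qed.

Unset Implicit Arguments.

Lemma card_inj (Y:Type) (X : set Y): (X #<= ~` X)%card ->
  exists h : Y -> Y, (forall x, X x -> ~ X (h x)) /\
    (forall x y, X x -> X y -> h x = h y -> x = y).
Proof.
move=> /card_leP [k].
pose h (x : Y) : Y := if pselect (X x) is left Hx then
   val (k (exist _ x (mem_set Hx))) else x.
exists h; split.
- move=> x Hx; rewrite /h; case: pselect => // Hx'.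
  by case: (k _) => /= z; rewrite inE.
- move=> x y Hx Hy; rewrite /h; case: pselect => // Hx'; case: pselect => // Hy'.
  move=> /val_inj /(@inj _ _ _ k) => H.
  have := H (in_setT _) (in_setT _). by case.
Qed.

Theorem proposition6p2 (Y : Type) (X : set Y) :
  (X #<= ~` X)%card ->
  (* pi maps S_infty(Y) into I(X) *)
  (forall f, @Sinf Y f -> IX X (hat X f)) /\
  (* continuity *)
  (forall V, sb_open (IX X) (pp_subbasis X) V ->
     sb_open (@Sinf Y) (@pw_subbasis Y) [set f | @Sinf Y f /\ V (hat X f)]) /\
  (* onto *)
  (forall g, IX X g -> exists f, @Sinf Y f /\ hat X f = g) /\
  (* open *)
  (forall U, sb_open (@Sinf Y) (@pw_subbasis Y) U ->
     sb_open (IX X) (pp_subbasis X) [set hat X f | f in U]).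
Proof.
move=> HX; have [h0 [hZ0 hinj0]] := @card_inj _ _ HX.
split; first by move=> f; apply: hat_IX.
split; first by move=> V; apply: continuity.
split.
  move=> g Hg; exists (onto X h0 g); split.
  - exact: (onto_bij hZ0 hinj0 Hg).
  - exact: (onto_hat hZ0 Hg).
move=> U [UI Uo]; split.
  by move=> g [f Uf <-]; apply: hat_IX; apply: UI.
move=> g [f Uf <-].
have bf := UI _ Uf. have [l [Hl1 Hl2]] := Uo _ Uf.
have [P HP] := pw_extract Hl1.
have [[lX HlX]|nfin] := pselect (exists l : list Y, forall x, X x -> In x l).
- have [lpp [H1 H2]] := fin_list X f lX.
  exists lpp; split => // g' [I1 [I2 I3]] Hg'.
  exists f => //; apply/seteqP; split => -[a b] /=.
  + move=> hab; have [Xa _] : X a /\ X b by case: hab => ? [].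
    by case: (H2 g' Hg' a (HlX a Xa) Xa) => + _; apply.
  + move=> gab; have [Xa _] := I1 _ gab.
    have [Ha1 Ha2] := H2 g' Hg' a (HlX a Xa) Xa.
    have [[y hy]|ny] := pselect (exists y, hat X f (a, y)).
    * by rewrite (I2 _ _ _ gab (Ha1 y hy)).
    * by case: (Ha2 (fun y hy => ny (ex_intro _ y hy)) b).
- have [s [Xs sinj]] := inf_seq nfin.
  have [h [r [hZ [hinj [rZ [rinj rnh]]]]]] := room hZ0 hinj0 Xs sinj.
  have [lpp [H1 H2]] := pp_list X bf P.
  exists lpp; split => // g' IXg' Hg'.
  have base : exists f0, Sinf f0 /\ hat X f0 = g' /\ forall n, f0 (r n) = r n.
    exists (onto X h g'); split; first exact: (onto_bij hZ hinj IXg').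
    split; first exact: (onto_hat hZ IXg').
    by move=> n; apply: onto_fix.
  have [f' [E [bf' [hf' [pin _]]]]] := pins bf rZ rinj base (H2 g' Hg').
  by exists f' => //; apply: Hl2 bf' (HP f' pin).
Qed.
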